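(* Let $p_F$ be the coupled-model failure function and $q_i^F$ the decoupled-model station failure functions described in the context, both built from the same data $k$, $(c_i)$, $(v_i)$, $(\lambda_{od})$, $(\rho_{od})$. Then for every $t\ge 0$, $$p_F(t)\le\sum_{i\in X}q_i^F(t),$$ i.e. $\mathbb P(V(t)=F)\le\sum_{i\in X}\mathbb P(\bar V_i(t)=F)$.
   Context: Fix $k\ge 1$ stations $X=\{1,\dots,k\}$, capacities $c_1,\dots,c_k\in\mathbb N$, and initial vehicle counts $v_1,\dots,v_k$ with $0\le v_i\le c_i$. For each ordered pair $o\neq d$ in $X$ let $\lambda_{od}:[0,\infty)\to[0,\infty)$ be a continuous demand intensity, and let $\rho_{od}\subset[0,\infty)$ be a locally finite set of rebalancing times; assume the sets $\rho_{od}$ are pairwise disjoint and do not contain $0$, and put $\rho=\bigcup_{o\neq d}\rho_{od}$. Travel times are taken to be zero. Coupled model. Let $\mathbb M_i=\{0,\dots,c_i\}$ and $\mathbb M=\mathbb M_1\times\dots\times\mathbb M_k$. For $o\neq d$ let $T_{od}:\mathbb Z^k\to\mathbb Z^k$ map $\mathbf m=(m_1,\dots,m_k)$ to $\mathbf m'$ with $m'_o=m_o-1$, $m'_d=m_d+1$, $m'_i=m_i$ otherwise; $T_{od}^{-1}$ is its inverse. Write $\mathbb M^{i=j}=\{\mathbf m\in\mathbb M: m_i=j\}$. The functions $p_{\mathbf m}$ ($\mathbf m\in\mathbb M$) and $p_F$ on $[0,\infty)$ are defined as follows, with the convention $p_{\mathbf m}:\equiv 0$ for $\mathbf m\notin\mathbb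 M$: - $p_{\mathbf m}(0)=1$ if $\mathbf m=(v_1,\dots,v_k)$, else $0$; $p_F(0)=0$. - At each $t\in\rho_{od}$: $p_{\mathbf m}(t)=\lim_{t'\to t^-}p_{T_{od}^{-1}(\mathbf m)}(t')$, and $p_F(t)=\lim_{t'\to t^-}\big(p_F(t')+\sum_{\mathbf m\in\mathbb M^{o=0}\cup\mathbb M^{d=c_d}}p_{\mathbf m}(t')\big)$. - On $[0,\infty)\setminus\rho$: $\dot p_{\mathbf m}(t)=\sum_{o\neq d}\lambda_{od}(t)\,p_{T_{od}^{-1}(\mathbf m)}(t)-p_{\mathbf m}(t)\sum_{o\neq d}\lambda_{od}(t)$ and $\dot p_F(t)=\sum_{o\neq d}\lambda_{od}(t)\sum_{\mathbf m\in\mathbb M^{o=0}\cup\mathbb M^{d=c_d}}p_{\mathbf m}(t)$. $p_F(t)$ is interpreted as $\mathbb P(V(t)=F)$, the probability that the system has experienced a failure in $[0,t]$. Decoupled model. For each station $i$ let $\lambda_i^a(t)=\sum_{o\neq i}\lambda_{oi}(t)$, $\lambda_i^d(t)=\sum_{d\neq i}\lambda_{id}(t)$, $\rho_i^a=\bigcup_{o\neq i}\rho_{oi}$ and $\rho_i^d=\bigcup_{d\neq i}\rho_{id}$. The functions $q_i^j$ ($0\le j\le c_i$) and $q_i^F$ on $[0,\infty)$ are defined, with the convention $q_i^{-1}\equiv q_i^{c_i+1}\equiv 0$, by: - $q_i^j(0)=1$ if $j=v_i$, else $0$; $q_i^F(0)=0$. - At $t\in\rho_i^a$: $q_i^j(t)=\lim_{t'\to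 t^-}q_i^{j-1}(t')$ and $q_i^F(t)=\lim_{t'\to t^-}(q_i^F(t')+q_i^{c_i}(t'))$. - At $t\in\rho_i^d$: $q_i^j(t)=\lim_{t'\to t^-}q_i^{j+1}(t')$ and $q_i^F(t)=\lim_{t'\to t^-}(q_i^F(t')+q_i^{0}(t'))$. - Elsewhere: $\dot q_i^j(t)=\lambda_i^a(t)q_i^{j-1}(t)-(\lambda_i^a(t)+\lambda_i^d(t))q_i^j(t)+\lambda_i^d(t)q_i^{j+1}(t)$ and $\dot q_i^F(t)=\lambda_i^a(t)q_i^{c_i}(t)+\lambda_i^d(t)q_i^0(t)$. $q_i^F(t)$ is interpreted as $\mathbb P(\bar V_i(t)=F)$, the probability that station $i$ has experienced a failure in $[0,t]$ in the decoupled model. *)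

(* Defs.v *)
From Stdlib Require Import Reals Lra Lia ZArith Arith List.
Import ListNotations.
Open Scope R_scope.

(* Stations are indexed 0 .. k-1 (paper: 1 .. k).
   A state m ∈ Z^k is represented by a list Z of length k; the i-th
   coordinate is [nth i m 0%Z]. *)

Definition sumR {A : Type} (l : list A) (f : A -> R) : R :=
  fold_right (fun x acc => f x + acc) 0 l.

Definition pairs (k : nat) : list (nat * nat) :=
  flat_map (fun o => map (fun d => (o, d))
                          (filter (fun d => negb (Nat.eqb o d)) (seq 0 k)))
           (seq 0 k).

Fixpoint boxes (cs : list nat) : list (list Z) :=
  match cs with
  | nil => [nil]
  | c :: cs' => flat_map (fun j => map (cons (Z.of_nat j)) (boxes cs'))
                         (seq 0 (S c))
  end.

Definition Mlist (k : nat) (c : nat -> nat) : list (list Z) :=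
  boxes (map c (seq 0 k)).

Definition inM (k : nat) (c : nat -> nat) (m : list Z) : Prop :=
  length m = k /\ forall i, (i < k)%nat -> (0 <= nth i m 0%Z <= Z.of_nat (c i))%Z.

Fixpoint upd (l : list Z) (i : nat) (f : Z -> Z) : list Z :=
  match l, i with
  | nil, _ => nil
  | x :: l', O => f x :: l'
  | x :: l', S i' => x :: upd l' i' f
  end.

Definition Tinv (o d : nat) (m : list Z) : list Z :=
  upd (upd m o (fun z => (z + 1)%Z)) d (fun z => (z - 1)%Z).

Definition failM (c : nat -> nat) (o d : nat) (m : list Z) : bool :=
  orb (Z.eqb (nth o m 0%Z) 0%Z) (Z.eqb (nth d m 0%Z) (Z.of_nat (c d))).

Definition left_lim (f : R -> R) (t l : R) : Prop :=
  forall eps, eps > 0 -> exists delta, delta > 0 /\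
    forall t', t - delta < t' < t -> Rabs (f t' - l) < eps.

Definition right_cont (f : R -> R) (t : R) : Prop :=
  forall eps, eps > 0 -> exists delta, delta > 0 /\
    forall t', t < t' < t + delta -> Rabs (f t' - f t) < eps.

Definition cont_nonneg (f : R -> R) : Prop :=
  forall t, 0 <= t -> forall eps, eps > 0 -> exists delta, delta > 0 /\
    forall t', 0 <= t' -> Rabs (t' - t) < delta -> Rabs (f t' - f t) < eps.

Definition valid_data (k : nat) (c v : nat -> nat)
  (lam : nat -> nat -> R -> R) (rho : nat -> nat -> R -> Prop) : Prop :=
  (1 <= k)%nat /\
  (forall i, (i < k)%nat -> (v i <= c i)%nat) /\
  (forall o d, (o < k)%nat -> (d < k)%nat -> o <> d ->
     cont_nonneg (lam o d) /\ (forall t, 0 <= t -> 0 <= lam o d t)) /\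
  (forall o d, (o < k)%nat -> (d < k)%nat -> o <> d ->
     (forall t, rho o d t -> 0 < t) /\
     (forall T, exists l : list R, forall t, rho o d t -> t <= T -> In t l)) /\
  (forall o d o' d' t, (o < k)%nat -> (d < k)%nat -> o <> d ->
     (o' < k)%nat -> (d' < k)%nat -> o' <> d' ->
     rho o d t -> rho o' d' t -> o = o' /\ d = d').

Definition rho_all (k : nat) (rho : nat -> nat -> R -> Prop) (t : R) : Prop :=
  exists o d, (o < k)%nat /\ (d < k)%nat /\ o <> d /\ rho o d t.

Definition init_state (k : nat) (v : nat -> nat) : list Z :=
  map (fun i => Z.of_nat (v i)) (seq 0 k).

Definition coupled_solution (k : nat) (c v : nat -> nat)
  (lam : nat -> nat -> R -> R) (rho : nat -> nat -> R -> Prop)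
  (p : list Z -> R -> R) (pF : R -> R) : Prop :=
  (forall m t, ~ inM k c m -> p m t = 0) /\
  (forall m, inM k c m ->
     p m 0 = if list_eq_dec Z.eq_dec m (init_state k v) then 1 else 0) /\
  pF 0 = 0 /\
  (forall o d t, (o < k)%nat -> (d < k)%nat -> o <> d -> rho o d t ->
     (forall m, inM k c m -> left_lim (p (Tinv o d m)) t (p m t)) /\
     left_lim (fun s => pF s + sumR (filter (failM c o d) (Mlist k c))
                                      (fun m => p m s)) t (pF t)) /\
  (forall t, 0 < t -> ~ rho_all k rho t ->
     (forall m, inM k c m ->
        derivable_pt_lim (p m) t
          (sumR (pairs k) (fun od => lam (fst od) (snd od) t
                                      * p (Tinv (fst od) (snd od) m) t)
           - p m t * sumR (pairs k) (fun od => lam (fst od) (snd od) t))) /\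
     derivable_pt_lim pF t
       (sumR (pairs k) (fun od => lam (fst od) (snd od) t *
          sumR (filter (failM c (fst od) (snd od)) (Mlist k c))
               (fun m => p m t)))) /\
  (forall t, 0 <= t -> (forall m, right_cont (p m) t) /\ right_cont pF t).

Definition others (k i : nat) : list nat :=
  filter (fun o => negb (Nat.eqb o i)) (seq 0 k).

Definition lam_a (k : nat) (lam : nat -> nat -> R -> R) (i : nat) (t : R) : R :=
  sumR (others k i) (fun o => lam o i t).
Definition lam_d (k : nat) (lam : nat -> nat -> R -> R) (i : nat) (t : R) : R :=
  sumR (others k i) (fun d => lam i d t).

Definition rho_a (k : nat) (rho : nat -> nat -> R -> Prop) (i : nat) (t : R) : Prop :=
  exists o, (o < k)%nat /\ o <> i /\ rho o i t.
Definition rho_d (k : nat) (rho : nat -> nat -> R -> Prop) (i : nat) (t : R) : Prop :=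
  exists d, (d < k)%nat /\ d <> i /\ rho i d t.

Definition decoupled_solution (k : nat) (c v : nat -> nat)
  (lam : nat -> nat -> R -> R) (rho : nat -> nat -> R -> Prop)
  (q : nat -> Z -> R -> R) (qF : nat -> R -> R) : Prop :=
  forall i, (i < k)%nat ->
  (* convention q_i^j = 0 for j outside {0..c_i} (in particular j=-1, c_i+1) *)
  (forall j t, (j < 0 \/ j > Z.of_nat (c i))%Z -> q i j t = 0) /\
  (forall j, (0 <= j <= Z.of_nat (c i))%Z ->
     q i j 0 = if Z.eqb j (Z.of_nat (v i)) then 1 else 0) /\
  qF i 0 = 0 /\
  (forall t, rho_a k rho i t ->
     (forall j, (0 <= j <= Z.of_nat (c i))%Z ->
        left_lim (q i (j - 1)%Z) t (q i j t)) /\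
     left_lim (fun s => qF i s + q i (Z.of_nat (c i)) s) t (qF i t)) /\
  (forall t, rho_d k rho i t ->
     (forall j, (0 <= j <= Z.of_nat (c i))%Z ->
        left_lim (q i (j + 1)%Z) t (q i j t)) /\
     left_lim (fun s => qF i s + q i 0%Z s) t (qF i t)) /\
  (forall t, 0 < t -> ~ rho_a k rho i t -> ~ rho_d k rho i t ->
     (forall j, (0 <= j <= Z.of_nat (c i))%Z ->
        derivable_pt_lim (q i j) t
          (lam_a k lam i t * q i (j - 1)%Z t
           - (lam_a k lam i t + lam_d k lam i t) * q i j t
           + lam_d k lam i t * q i (j + 1)%Z t)) /\
     derivable_pt_lim (qF i) t
       (lam_a k lam i t * q i (Z.of_nat (c i)) t + lam_d k lam i t * q i 0%Z t)) /\
  (forall t, 0 <= t -> (forall j, right_cont (q i j) t) /\ right_cont (qF i) t).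

(* Main.v *)
Require Import Defs.
From Stdlib Require Import Reals ZArith List Lra Lia Classical.
Import ListNotations.
Open Scope R_scope.

Lemma real_ind (P : R -> Prop) a b : a <= b -> P a ->
 (forall t, a <= t < b -> P t -> exists d, d > 0 /\ forall s, t < s < t + d -> P s) ->
 (forall t, a < t <= b -> (forall s, a <= s < t -> P s) -> P t) ->
 forall t, a <= t <= b -> P t.
Proof.
  intros Hab Pa Hext Hcl.
  set (E := fun x => a <= x <= b /\ forall s, a <= s <= x -> P s).
  assert (HEa : E a).
  { split; [lra|]. intros s Hs. replace s with a by lra. exact Pa. }
  assert (Hb : bound E). { exists b. intros x [Hx _]. lra. }
  destruct (completeness E Hb (ex_intro _ a HEa)) as [m [Hub Hlub]].
  assert (Ham : a <= m) by (apply Hub; exact HEa).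
  assert (Hmb : m <= b).
  { apply Hlub. intros x [Hx _]. lra. }
  assert (Hbelow : forall s, a <= s < m -> P s).
  { intros s Hs. destruct (classic (exists x, E x /\ s < x)) as [[x [[_ Hx] Hsx]]|Hn].
    - apply Hx. lra.
    - exfalso. assert (is_upper_bound E s).
      { intros x Ex. destruct (Rle_dec x s) as [|Hxs]; [assumption|].
        exfalso; apply Hn; exists x; split; [assumption|lra]. }
      specialize (Hlub s H). lra. }
  assert (Pm : P m).
  { destruct (Req_dec m a) as [->|Hne]; [exact Pa|]. apply Hcl; [lra|]. exact Hbelow. }
  assert (Em : E m).
  { split; [lra|]. intros s Hs. destruct (Req_dec s m) as [->|]; [exact Pm|]. apply Hbelow. lra. }
  assert (Hmeqb : m = b).
  { destruct (Rle_lt_or_eq_dec m b Hmb) as [Hne|]; [|assumption]. exfalso.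
    destruct (Hext m (conj Ham Hne) Pm) as [d [Hd Hs]].
    set (x := Rmin (m + d/2) b).
    assert (E x).
    { split. unfold x. split; [apply Rmin_case; lra| apply Rmin_r].
      intros s Hs'. destruct (Rle_dec s m). apply Em; lra.
      apply Hs. split; [lra|]. unfold x in Hs'. assert (Rmin (m + d/2) b <= m + d/2) by apply Rmin_l. lra. }
    specialize (Hub x H). unfold x in Hub. revert Hub. apply Rmin_case; lra. }
  intros t Ht. subst m. apply Em. lra.
Qed.

Lemma finite_min {A} (L : list A) (Q : A -> R -> Prop) :
  (forall a d d', In a L -> 0 < d' <= d -> Q a d -> Q a d') ->
  (forall a, In a L -> exists d, d > 0 /\ Q a d) ->
  exists d, d > 0 /\ forall a, In a L -> Q a d.
Proof.
  intros Hmon. induction L as [|x L IH]; intros H.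
  - exists 1. split; [lra|]. intros a [].
  - destruct (H x (or_introl eq_refl)) as [d1 [Hd1 Q1]].
    destruct IH as [d2 [Hd2 Q2]].
    { intros a b0 d' Ha. apply Hmon. right; assumption. }
    { intros a Ha. apply H. right; assumption. }
    exists (Rmin d1 d2). split. apply Rmin_case; lra.
    intros a [<-|Ha].
    + apply Hmon with d1; [left; reflexivity| split; [apply Rmin_case; lra|apply Rmin_l]|assumption].
    + apply Hmon with d2; [right; assumption| split; [apply Rmin_case; lra|apply Rmin_r]|auto].
Qed.

Lemma left_lim_of_deriv f t d : derivable_pt_lim f t d -> left_lim f t (f t).
Proof.
  intros H eps Heps.
  destruct (H 1 Rlt_0_1) as [del Hdel].
  set (K := Rabs d + 1).
  assert (HK : 0 < K) by (unfold K; pose proof (Rabs_pos d); lra).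
  exists (Rmin del (eps / K)). split.
  { apply Rmin_case. apply cond_pos. apply Rdiv_lt_0_compat; lra. }
  intros t' [H1 H2].
  set (h := t' - t).
  assert (Hh0 : h <> 0) by (unfold h; lra).
  assert (Hhd : Rabs h < del).
  { unfold h. rewrite Rabs_left by lra. assert (Rmin del (eps/K) <= del) by apply Rmin_l. lra. }
  assert (Hhe : Rabs h < eps / K).
  { unfold h. rewrite Rabs_left by lra. assert (Rmin del (eps/K) <= eps/K) by apply Rmin_r. lra. }
  specialize (Hdel h Hh0 Hhd).
  replace (t + h) with t' in Hdel by (unfold h; ring).
  set (z := (f t' - f t) / h) in Hdel.
  assert (Hz : f t' - f t = z * h) by (unfold z; field; assumption).
  rewrite Hz, Rabs_mult.
  assert (Hz1 : Rabs z <= K).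
  { unfold K. replace z with ((z - d) + d) by ring.
    pose proof (Rabs_triang (z - d) d). lra. }
  assert (Hz2 : Rabs z * Rabs h <= K * Rabs h) by (apply Rmult_le_compat_r; [apply Rabs_pos|assumption]).
  assert (Hz3 : K * Rabs h < K * (eps / K)) by (apply Rmult_lt_compat_l; assumption).
  replace (K * (eps / K)) with eps in Hz3 by (field; lra). lra.
Qed.

Lemma left_lim_nonneg f t l a : left_lim f t l -> a < t ->
  (forall s, a <= s < t -> 0 <= f s) -> 0 <= l.
Proof.
  intros H Hat Hf. destruct (Rle_dec 0 l) as [|Hl]; [assumption|]. exfalso.
  destruct (H (- l)) as [d [Hd Hs]]; [lra|].
  set (s := Rmax (t - d/2) ((a + t)/2)).
  assert (t - d/2 <= s) by apply Rmax_l.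
  assert ((a+t)/2 <= s) by apply Rmax_r.
  assert (s < t) by (unfold s; apply Rmax_case; lra).
  specialize (Hs s ltac:(lra)). specialize (Hf s ltac:(lra)).
  apply Rabs_def2 in Hs. lra.
Qed.

Lemma deriv_pos_left f x d a : derivable_pt_lim f x d -> d > 0 -> a < x ->
  exists s, a <= s < x /\ f s < f x.
Proof.
  intros H Hd Hax. destruct (H d Hd) as [del Hdel].
  set (h := - Rmin (del/2) ((x - a)/2)).
  assert (Hm : 0 < Rmin (del/2) ((x-a)/2)) by (apply Rmin_case; pose proof (cond_pos del); lra).
  assert (Rmin (del/2) ((x-a)/2) <= del/2) by apply Rmin_l.
  assert (Rmin (del/2) ((x-a)/2) <= (x-a)/2) by apply Rmin_r.
  assert (Hh0 : h <> 0) by (unfold h; lra).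
  assert (Hhd : Rabs h < del) by (unfold h; rewrite Rabs_left by lra; pose proof (cond_pos del); lra).
  specialize (Hdel h Hh0 Hhd). exists (x + h). split; [unfold h; lra|].
  apply Rabs_def2 in Hdel. destruct Hdel as [_ Hlow].
  assert (Hq : 0 < (f (x + h) - f x) / h) by lra.
  assert (Hh : h < 0) by (unfold h; lra).
  destruct (Rlt_dec (f (x+h)) (f x)) as [|Hn]; [assumption|]. exfalso.
  assert ((f (x + h) - f x) / h <= 0).
  { unfold Rdiv. replace ((f (x + h) - f x) * / h) with (- ((f (x+h) - f x) * / (-h))) by (field; lra).
    assert (0 <= (f (x + h) - f x) * / - h). apply Rmult_le_pos; [lra| left; apply Rinv_0_lt_compat; lra]. lra. }
  lra.
Qed.

Lemma dplus f g x a b : derivable_pt_lim f x a -> derivable_pt_lim g x b ->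
  derivable_pt_lim (fun y => f y + g y) x (a + b).
Proof. intros; exact (derivable_pt_lim_plus f g x a b H H0). Qed.
Lemma dminus f g x a b : derivable_pt_lim f x a -> derivable_pt_lim g x b ->
  derivable_pt_lim (fun y => f y - g y) x (a - b).
Proof. intros; exact (derivable_pt_lim_minus f g x a b H H0). Qed.

Lemma dlin e M t0 x : derivable_pt_lim (fun y => e * (1 + M * (y - t0))) x (e * M).
Proof.
  intros eps Heps. exists (mkposreal 1 Rlt_0_1). intros h Hh _.
  replace ((e * (1 + M * (x + h - t0)) - e * (1 + M * (x - t0))) / h - e * M) with 0
    by (field; assumption). rewrite Rabs_R0. assumption.
Qed.

Lemma pos_lemma {A} (L : list A) (u : A -> R -> R) (S : R -> Prop) (T B : R) :
 0 <= B ->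
 (forall a, In a L -> 0 <= u a 0) ->
 (forall a t, In a L -> 0 <= t -> right_cont (u a) t) ->
 (forall t, 0 <= t -> exists d, d > 0 /\ forall s, t < s < t + d -> ~ S s) ->
 (forall t, 0 < t <= T -> S t -> (forall s, 0 <= s < t -> forall b, In b L -> 0 <= u b s) ->
    forall a, In a L -> 0 <= u a t) ->
 (forall t, 0 < t <= T -> ~ S t -> forall a, In a L -> exists d, derivable_pt_lim (u a) t d /\
    forall eta, 0 <= eta -> (forall b, In b L -> - eta <= u b t) -> u a t <= 0 -> - B * eta <= d) ->
 forall t, 0 <= t <= T -> forall a, In a L -> 0 <= u a t.
Proof.
  intros HB H0 Hrc Hfin Hjump Hder t Ht.
  apply (real_ind (fun t => forall a, In a L -> 0 <= u a t) 0 T); try lra; [exact H0| |].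
  -
    intros t0 Ht0 P0.
    destruct (Hfin t0 ltac:(lra)) as [d0 [Hd0 Hns]].
    set (M := 2 * B + 1).
    assert (HM : 0 < M) by (unfold M; lra).
    set (t1 := Rmin (t0 + d0) (Rmin T (t0 + 1/M))).
    assert (Ht1a : t1 <= t0 + d0) by apply Rmin_l.
    assert (Ht1b : t1 <= T) by (unfold t1; rewrite Rmin_comm; eapply Rle_trans; [apply Rmin_l|]; apply Rmin_l).
    assert (Ht1c : t1 <= t0 + 1/M) by (unfold t1; rewrite Rmin_comm; eapply Rle_trans; [apply Rmin_l|]; apply Rmin_r).
    assert (HM1 : 0 < 1/M) by (apply Rdiv_lt_0_compat; lra).
    assert (Ht1 : t0 < t1) by (unfold t1; repeat apply Rmin_case; lra).
    assert (Inner : forall e, 0 < e -> forall s, t0 <= s < t1 -> forall a, In a L ->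
                      0 < u a s + e * (1 + M * (s - t0))).
    { intros e He s Hs.
      apply (real_ind (fun x => forall a, In a L -> 0 < u a x + e * (1 + M * (x - t0))) t0 s);
        try lra.
      - intros a Ha. specialize (P0 a Ha). replace (t0 - t0) with 0 by ring. lra.
      - intros x Hx Px.
        cut (exists d, d > 0 /\ forall a, In a L -> forall y, x < y < x + d -> 0 < u a y + e * (1 + M * (y - t0))).
        { intros [d [Hd Hq]]. exists d. split; [exact Hd|]. intros y Hy a Ha. apply Hq; assumption. }
        apply (finite_min L (fun a d => forall y, x < y < x + d -> 0 < u a y + e * (1 + M * (y - t0)))).
        { intros a d d' _ Hd Hq y Hy. apply Hq. lra. }
        intros a Ha. specialize (Px a Ha).
        set (w := u a x + e * (1 + M * (x - t0))) in *.
        destruct (Hrc a x Ha ltac:(lra) (w/2) ltac:(lra)) as [dl [Hdl Hdl']].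
        exists dl. split; [assumption|]. intros y Hy.
        specialize (Hdl' y Hy). apply Rabs_def2 in Hdl'.
        assert (M * (x - t0) <= M * (y - t0)) by (apply Rmult_le_compat_l; lra).
        assert (e * (1 + M * (x - t0)) <= e * (1 + M * (y - t0))) by (apply Rmult_le_compat_l; lra).
        unfold w in *. lra.
      - intros x Hx Px.
        assert (HxS : ~ S x) by (apply Hns; lra).
        assert (Hx0 : 0 < x <= T) by lra.
        assert (Hw : forall b, In b L -> 0 <= u b x + e * (1 + M * (x - t0))).
        { intros b Hb. destruct (Hder x Hx0 HxS b Hb) as [db [Hdb _]].
          pose proof (dplus _ _ _ _ _ Hdb (dlin e M t0 x)) as Hw.
          apply (left_lim_nonneg _ x _ t0 (left_lim_of_deriv _ _ _ Hw)); [lra|].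
          intros y Hy. left. apply Px; [lra|assumption]. }
        intros a Ha. destruct (Rle_dec (u a x + e * (1 + M * (x - t0))) 0) as [Hle|]; [|lra].
        exfalso.
        destruct (Hder x Hx0 HxS a Ha) as [da [Hda Hbound]].
        set (eta := e * (1 + M * (x - t0))).
        assert (Hxt : M * (x - t0) <= 1).
        { assert (x - t0 <= 1 / M) by lra.
          apply Rmult_le_compat_l with (r := M) in H; [|lra].
          replace (M * (1/M)) with 1 in H by (field; lra). lra. }
        assert (Heta0 : 0 <= eta) by (unfold eta; apply Rmult_le_pos; [lra|]; 
           assert (0 <= M * (x - t0)) by (apply Rmult_le_pos; lra); lra).
        assert (Heta2 : eta <= 2 * e) by (unfold eta; nra).
        specialize (Hbound eta Heta0).
        assert (Hb1 : - B * eta <= da).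
        { apply Hbound. intros b Hb. specialize (Hw b Hb). unfold eta. lra.
          pose proof (Hw a Ha). unfold eta in *. lra. }
        pose proof (dplus _ _ _ _ _ Hda (dlin e M t0 x)) as Hwd.
        assert (Hpos : da + e * M > 0).
        { assert (B * eta <= B * (2 * e)) by (apply Rmult_le_compat_l; lra).
          unfold M in *. nra. }
        destruct (deriv_pos_left _ _ _ t0 Hwd Hpos ltac:(lra)) as [s' [Hs' Hlt]].
        specialize (Px s' ltac:(lra) a Ha). pose proof (Hw a Ha). lra. }
    exists (t1 - t0). split; [lra|]. intros s Hs a Ha.
    destruct (Rle_dec 0 (u a s)) as [|Hneg]; [assumption|]. exfalso.
    set (e := - u a s / 4).
    specialize (Inner e ltac:(unfold e; lra) s ltac:(lra) a Ha).
    assert (M * (s - t0) <= 1).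
    { assert (s - t0 <= 1 / M) by lra.
      apply Rmult_le_compat_l with (r := M) in H; [|lra].
      replace (M * (1/M)) with 1 in H by (field; lra). lra. }
    assert (e * (1 + M * (s - t0)) <= e * 2) by (apply Rmult_le_compat_l; unfold e; lra).
    unfold e in *. lra.
  -
    intros x Hx Px. destruct (classic (S x)) as [HS|HnS].
    + apply Hjump; [lra|assumption|]. intros s Hs b Hb. apply Px; [lra|assumption].
    + intros a Ha. destruct (Hder x Hx HnS a Ha) as [da [Hda _]].
      apply (left_lim_nonneg _ x _ 0 (left_lim_of_deriv _ _ _ Hda)); [lra|].
      intros y Hy. apply Px; [lra|assumption].
Qed.

Lemma sumR_nil {A} (f : A -> R) : sumR [] f = 0. Proof. reflexivity. Qed.
Lemma sumR_cons {A} x (l : list A) f : sumR (x :: l) f = f x + sumR l f. Proof. reflexivity. Qed.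

Lemma sumR_app {A} (l1 l2 : list A) f : sumR (l1 ++ l2) f = sumR l1 f + sumR l2 f.
Proof. induction l1; simpl; [ring| rewrite IHl1; ring]. Qed.

Lemma sumR_ext {A} (l : list A) f g : (forall x, In x l -> f x = g x) -> sumR l f = sumR l g.
Proof. induction l; simpl; intros H; [reflexivity|]. rewrite H, IHl; auto. Qed.

Lemma sumR_le {A} (l : list A) f g : (forall x, In x l -> f x <= g x) -> sumR l f <= sumR l g.
Proof. induction l; simpl; intros H; [lra|]. pose proof (H a (or_introl eq_refl)).
  pose proof (IHl (fun x Hx => H x (or_intror Hx))). lra. Qed.

Lemma sumR_plus {A} (l : list A) f g : sumR l (fun x => f x + g x) = sumR l f + sumR l g.
Proof. induction l; simpl; [ring| rewrite IHl; ring]. Qed.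
Lemma sumR_minus {A} (l : list A) f g : sumR l (fun x => f x - g x) = sumR l f - sumR l g.
Proof. induction l; simpl; [ring| rewrite IHl; ring]. Qed.
Lemma sumR_scal {A} (l : list A) a f : sumR l (fun x => a * f x) = a * sumR l f.
Proof. induction l; simpl; [ring| rewrite IHl; ring]. Qed.
Lemma sumR_zero {A} (l : list A) : sumR l (fun _ => 0) = 0.
Proof. induction l; simpl; [ring| rewrite IHl; ring]. Qed.
Lemma sumR_map {A B} (l : list A) (g : A -> B) f : sumR (map g l) f = sumR l (fun x => f (g x)).
Proof. induction l; simpl; [ring| rewrite IHl; ring]. Qed.
Lemma sumR_flat_map {A B} (l : list A) (g : A -> list B) f :
  sumR (flat_map g l) f = sumR l (fun x => sumR (g x) f).
Proof. induction l; simpl; [ring| rewrite sumR_app, IHl; ring]. Qed.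
Lemma sumR_filter {A} (l : list A) P f :
  sumR (filter P l) f = sumR l (fun x => if P x then f x else 0).
Proof. induction l; simpl; [ring|]. destruct (P a); simpl; rewrite IHl; ring. Qed.
Lemma sumR_swap {A B} (l1 : list A) (l2 : list B) F :
  sumR l1 (fun x => sumR l2 (fun y => F x y)) = sumR l2 (fun y => sumR l1 (fun x => F x y)).
Proof. induction l1; simpl. rewrite sumR_zero; ring.
  rewrite IHl1, <- sumR_plus. reflexivity. Qed.

Lemma sumR_single {A} (l : list A) f a : NoDup l -> In a l ->
  (forall x, In x l -> x <> a -> f x = 0) -> sumR l f = f a.
Proof.
  induction l as [|y l IH]; intros Hnd Ha H; [destruct Ha|].
  inversion Hnd; subst. simpl. destruct Ha as [<-|Ha].
  - rewrite (sumR_ext l f (fun _ => 0)), sumR_zero; [ring|].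
    intros x Hx. apply H; [right; auto|]. intros ->. contradiction.
  - rewrite IH; auto. rewrite H; [ring|left; auto|]. intros ->; contradiction.
    intros x Hx Hne. apply H; [right|]; auto.
Qed.

Lemma sumR_none {A} (l : list A) f : (forall x, In x l -> f x = 0) -> sumR l f = 0.
Proof. intros H. rewrite (sumR_ext l f (fun _ => 0)) by auto. apply sumR_zero. Qed.

Lemma sumR_nonneg {A} (l : list A) f : (forall x, In x l -> 0 <= f x) -> 0 <= sumR l f.
Proof. intros H. rewrite <- (sumR_zero l). apply sumR_le. auto. Qed.

Lemma sumR_remove_le {A} (dec : forall x y : A, {x = y} + {x <> y}) (l : list A) f a :
  (forall x, 0 <= f x) -> In a l -> f a + sumR (remove dec a l) f <= sumR l f.
Proof.
  intros Hf. induction l as [|y l IH]; intros Ha; [destruct Ha|]. simpl.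
  destruct (dec a y) as [->|Hne].
  - destruct (in_dec dec y l) as [Hi|Hni].
    + specialize (IH Hi). pose proof (Hf y). lra.
    + rewrite notin_remove by auto. lra.
  - simpl. destruct Ha as [->|Ha]; [congruence|]. specialize (IH Ha). lra.
Qed.

Lemma sumR_sub_le {A} (dec : forall x y : A, {x = y} + {x <> y}) (K L : list A) f :
  (forall x, 0 <= f x) -> NoDup K -> (forall x, In x K -> f x <> 0 -> In x L) ->
  sumR K f <= sumR L f.
Proof.
  intros Hf. revert L. induction K as [|x K IH]; intros L Hnd Hin; simpl.
  - apply sumR_nonneg. auto.
  - inversion Hnd; subst. destruct (Req_dec (f x) 0) as [Hz|Hnz].
    + rewrite Hz. rewrite Rplus_0_l. apply IH; auto. intros y Hy. apply Hin. right; auto.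
    + pose proof (sumR_remove_le dec L f x Hf (Hin x (or_introl eq_refl) Hnz)).
      assert (sumR K f <= sumR (remove dec x L) f).
      { apply IH; auto. intros y Hy Hfy. apply in_in_remove.
        intros ->; contradiction. apply Hin; [right|]; auto. }
      lra.
Qed.

Lemma derivable_sumR {A} (l : list A) (F : A -> R -> R) dF t :
  (forall x, In x l -> derivable_pt_lim (F x) t (dF x)) ->
  derivable_pt_lim (fun s => sumR l (fun x => F x s)) t (sumR l dF).
Proof.
  induction l as [|a l IH]; intros H; simpl.
  - apply (derivable_pt_lim_const 0 t).
  - apply (derivable_pt_lim_plus (F a) (fun s => sumR l (fun x => F x s))).
    apply H; left; auto. apply IH. intros; apply H; right; auto.
Qed.

Lemma left_lim_plus f g t a b : left_lim f t a -> left_lim g t b -> left_lim (fun s => f s + g s) t (a + b).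
Proof.
  intros Hf Hg eps Heps.
  destruct (Hf (eps/2) ltac:(lra)) as [d1 [Hd1 H1]].
  destruct (Hg (eps/2) ltac:(lra)) as [d2 [Hd2 H2]].
  exists (Rmin d1 d2). split; [apply Rmin_case; lra|]. intros s Hs.
  assert (Rmin d1 d2 <= d1) by apply Rmin_l. assert (Rmin d1 d2 <= d2) by apply Rmin_r.
  specialize (H1 s ltac:(lra)). specialize (H2 s ltac:(lra)).
  replace (f s + g s - (a + b)) with ((f s - a) + (g s - b)) by ring.
  pose proof (Rabs_triang (f s - a) (g s - b)). lra.
Qed.

Lemma left_lim_opp f t a : left_lim f t a -> left_lim (fun s => - f s) t (- a).
Proof.
  intros Hf eps Heps. destruct (Hf eps Heps) as [d [Hd H]]. exists d. split; auto.
  intros s Hs. replace (- f s - - a) with (- (f s - a)) by ring. rewrite Rabs_Ropp. auto.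
Qed.

Lemma left_lim_const a t : left_lim (fun _ => a) t a.
Proof. intros eps Heps. exists 1. split; [lra|]. intros. replace (a - a) with 0 by ring.
  rewrite Rabs_R0; lra. Qed.

Lemma left_lim_scal f t a r : left_lim f t a -> left_lim (fun s => r * f s) t (r * a).
Proof.
  intros Hf eps Heps. destruct (Hf (eps / (Rabs r + 1))) as [d [Hd H]].
  { apply Rdiv_lt_0_compat; [lra|]. pose proof (Rabs_pos r); lra. }
  exists d. split; auto. intros s Hs. specialize (H s Hs).
  replace (r * f s - r * a) with (r * (f s - a)) by ring. rewrite Rabs_mult.
  assert (Rabs r * Rabs (f s - a) <= (Rabs r + 1) * Rabs (f s - a)).
  { apply Rmult_le_compat_r; [apply Rabs_pos|lra]. }
  assert ((Rabs r + 1) * Rabs (f s - a) < (Rabs r + 1) * (eps / (Rabs r + 1))).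
  { apply Rmult_lt_compat_l; [pose proof (Rabs_pos r); lra| auto]. }
  replace ((Rabs r + 1) * (eps / (Rabs r + 1))) with eps in H1 by (field; pose proof (Rabs_pos r); lra).
  lra.
Qed.

Lemma left_lim_ext f g t a : (forall s, f s = g s) -> left_lim f t a -> left_lim g t a.
Proof. intros E H eps He. destruct (H eps He) as [d [Hd H']]. exists d. split; auto.
  intros; rewrite <- E; auto. Qed.

Lemma left_lim_sumR {A} (l : list A) (F : A -> R -> R) L t :
  (forall x, In x l -> left_lim (F x) t (L x)) ->
  left_lim (fun s => sumR l (fun x => F x s)) t (sumR l L).
Proof.
  induction l as [|a l IH]; intros H; simpl.
  - apply left_lim_const.
  - apply (left_lim_plus (F a) (fun s => sumR l (fun x => F x s))).
    apply H; left; auto. apply IH. intros; apply H; right; auto.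
Qed.

Lemma right_cont_plus f g t : right_cont f t -> right_cont g t -> right_cont (fun s => f s + g s) t.
Proof.
  intros Hf Hg eps Heps.
  destruct (Hf (eps/2) ltac:(lra)) as [d1 [Hd1 H1]].
  destruct (Hg (eps/2) ltac:(lra)) as [d2 [Hd2 H2]].
  exists (Rmin d1 d2). split; [apply Rmin_case; lra|]. intros s Hs.
  assert (Rmin d1 d2 <= d1) by apply Rmin_l. assert (Rmin d1 d2 <= d2) by apply Rmin_r.
  specialize (H1 s ltac:(lra)). specialize (H2 s ltac:(lra)).
  replace (f s + g s - (f t + g t)) with ((f s - f t) + (g s - g t)) by ring.
  pose proof (Rabs_triang (f s - f t) (g s - g t)). lra.
Qed.

Lemma right_cont_opp f t : right_cont f t -> right_cont (fun s => - f s) t.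
Proof.
  intros Hf eps Heps. destruct (Hf eps Heps) as [d [Hd H]]. exists d. split; auto.
  intros s Hs. replace (- f s - - f t) with (- (f s - f t)) by ring. rewrite Rabs_Ropp. auto.
Qed.

Lemma right_cont_const a t : right_cont (fun _ => a) t.
Proof. intros eps Heps. exists 1. split; [lra|]. intros. replace (a - a) with 0 by ring.
  rewrite Rabs_R0; lra. Qed.

Lemma right_cont_sumR {A} (l : list A) (F : A -> R -> R) t :
  (forall x, In x l -> right_cont (F x) t) ->
  right_cont (fun s => sumR l (fun x => F x s)) t.
Proof.
  induction l as [|a l IH]; intros H; simpl.
  - apply right_cont_const.
  - apply (right_cont_plus (F a) (fun s => sumR l (fun x => F x s))).
    apply H; left; auto. apply IH. intros; apply H; right; auto.
Qed.

Lemma sumR_mult_r {A} (l : list A) a f : sumR l (fun x => f x * a) = sumR l f * a.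
Proof. induction l; simpl; [ring| rewrite IHl; ring]. Qed.

Lemma right_cont_minus f g t : right_cont f t -> right_cont g t -> right_cont (fun s => f s - g s) t.
Proof. intros. apply (right_cont_plus f (fun s => - g s)); auto. apply right_cont_opp; auto. Qed.

Lemma left_lim_minus f g t a b : left_lim f t a -> left_lim g t b -> left_lim (fun s => f s - g s) t (a - b).
Proof. intros. apply (left_lim_plus f (fun s => - g s)); auto. apply left_lim_opp; auto. Qed.

Lemma pairs_In k o d : In (o, d) (pairs k) <-> (o < k)%nat /\ (d < k)%nat /\ o <> d.
Proof.
  unfold pairs. rewrite in_flat_map. split.
  - intros [x [Hx Hin]]. apply in_map_iff in Hin. destruct Hin as [y [Heq Hy]].
    injection Heq as -> ->. apply filter_In in Hy. destruct Hy as [Hy Hne].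
    apply in_seq in Hx. apply in_seq in Hy. apply Bool.negb_true_iff, Nat.eqb_neq in Hne. lia.
  - intros [Ho [Hd Hne]]. exists o. split; [apply in_seq; lia|].
    apply in_map_iff. exists d. split; [reflexivity|]. apply filter_In. split; [apply in_seq; lia|].
    apply Bool.negb_true_iff, Nat.eqb_neq. auto.
Qed.

Lemma sumR_pairs k F : sumR (pairs k) F =
  sumR (seq 0 k) (fun o => sumR (seq 0 k) (fun d => if Nat.eqb o d then 0 else F (o, d))).
Proof.
  unfold pairs. rewrite sumR_flat_map. apply sumR_ext. intros o _.
  rewrite sumR_map, sumR_filter. apply sumR_ext. intros d _. destruct (Nat.eqb o d); reflexivity.
Qed.

Lemma sumR_others k i g : sumR (others k i) g = sumR (seq 0 k) (fun d => if Nat.eqb d i then 0 else g d).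
Proof. unfold others. rewrite sumR_filter. apply sumR_ext. intros d _. destruct (Nat.eqb d i); reflexivity. Qed.

Lemma sumR_ind_seq k i (f : nat -> R) : (i < k)%nat ->
  sumR (seq 0 k) (fun j => if Nat.eqb j i then f j else 0) = f i.
Proof.
  intros Hi. rewrite (sumR_single _ _ i (seq_NoDup k 0)).
  - rewrite Nat.eqb_refl. reflexivity.
  - apply in_seq; lia.
  - intros x _ Hne. apply Nat.eqb_neq in Hne. rewrite Hne. reflexivity.
Qed.

Lemma PL_o k i F : (i < k)%nat ->
  sumR (pairs k) (fun od => if Nat.eqb (fst od) i then F od else 0) = sumR (others k i) (fun d => F (i, d)).
Proof.
  intros Hi. rewrite sumR_pairs, sumR_others. simpl.
  rewrite (sumR_single _ _ i (seq_NoDup k 0)).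
  - apply sumR_ext. intros d _. rewrite Nat.eqb_refl, (Nat.eqb_sym i d). reflexivity.
  - apply in_seq; lia.
  - intros x _ Hne. apply Nat.eqb_neq in Hne. apply sumR_none. intros d _. rewrite Hne.
    destruct (Nat.eqb x d); reflexivity.
Qed.

Lemma PL_d k i F : (i < k)%nat ->
  sumR (pairs k) (fun od => if Nat.eqb (snd od) i then F od else 0) = sumR (others k i) (fun o => F (o, i)).
Proof.
  intros Hi. rewrite sumR_pairs, sumR_others. simpl. apply sumR_ext. intros o _.
  rewrite (sumR_single _ _ i (seq_NoDup k 0)).
  - rewrite Nat.eqb_refl. destruct (Nat.eqb_spec o i); destruct (Nat.eqb_spec i o); try reflexivity; congruence.
  - apply in_seq; lia.
  - intros x _ Hne. apply Nat.eqb_neq in Hne. rewrite Hne. destruct (Nat.eqb o x); reflexivity.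
Qed.

Lemma boxes_In cs l : In l (boxes cs) <->
  length l = length cs /\ forall i, (i < length cs)%nat -> (0 <= nth i l 0 <= Z.of_nat (nth i cs 0%nat))%Z.
Proof.
  revert l. induction cs as [|c cs IH]; intros l; cbn [boxes length].
  - split.
    + intros [<-|[]]. split; [reflexivity|]. intros; lia.
    + intros [Hl _]. destruct l; [left; reflexivity| discriminate].
  - rewrite in_flat_map. split.
    + intros [j [Hj Hin]]. apply in_map_iff in Hin. destruct Hin as [l' [<- Hl']].
      apply IH in Hl'. destruct Hl' as [Hlen Hb]. apply in_seq in Hj. simpl. split; [lia|].
      intros [|i] Hi; simpl; [lia|]. apply Hb. lia.
    + intros [Hlen Hb]. destruct l as [|x l']; [discriminate|]. simpl in Hlen.
      pose proof (Hb 0%nat ltac:(lia)) as H0. simpl in H0.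
      exists (Z.to_nat x). split; [apply in_seq; lia|]. apply in_map_iff. exists l'.
      split; [f_equal; lia|]. apply IH. split; [lia|]. intros i Hi. apply (Hb (S i)). lia.
Qed.

Lemma NoDup_boxes cs : NoDup (boxes cs).
Proof.
  induction cs as [|c cs IH]; cbn [boxes].
  - constructor; [intros []|constructor].
  - assert (forall js, NoDup js -> NoDup (flat_map (fun j => map (cons (Z.of_nat j)) (boxes cs)) js)).
    { induction js as [|j js IHj]; intros Hnd; simpl; [constructor|].
      inversion Hnd; subst. apply NoDup_app.
      - apply NoDup_map_NoDup_ForallPairs; auto. intros a b _ _ H. injection H; auto.
      - auto.
      - intros a Ha Hb. apply in_map_iff in Ha. destruct Ha as [l1 [<- _]].
        apply in_flat_map in Hb. destruct Hb as [j' [Hj' Hb]]. apply in_map_iff in Hb.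
        destruct Hb as [l2 [Heq _]]. injection Heq as Hjj _. apply Nat2Z.inj in Hjj. subst. contradiction. }
    apply H. apply seq_NoDup.
Qed.

Lemma In_Mlist k c m : In m (Mlist k c) <-> inM k c m.
Proof.
  assert (E : forall i, (i < k)%nat -> nth i (map c (seq 0 k)) 0%nat = c i).
  { intros i Hi. erewrite nth_indep with (d' := c 0%nat) by (rewrite length_map, length_seq; lia).
    rewrite map_nth, seq_nth by lia. reflexivity. }
  unfold Mlist, inM. rewrite boxes_In. rewrite length_map, length_seq.
  split; intros [Hl H]; split; auto; intros i Hi; specialize (H i Hi); rewrite E in *; auto.
Qed.

Lemma NoDup_Mlist k c : NoDup (Mlist k c).
Proof. apply NoDup_boxes. Qed.

Lemma length_upd l i f : length (upd l i f) = length l.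
Proof. revert i; induction l; intros [|i]; simpl; auto. Qed.

Lemma nth_upd l i f j : (i < length l)%nat ->
  nth j (upd l i f) 0%Z = if Nat.eqb j i then f (nth i l 0%Z) else nth j l 0%Z.
Proof.
  revert i j; induction l as [|x l IH]; intros i j Hi; simpl in Hi; [lia|].
  destruct i as [|i]; destruct j as [|j]; simpl; try reflexivity. apply IH; lia.
Qed.

Lemma upd_inj l1 l2 i f : (forall x y, f x = f y -> x = y) -> upd l1 i f = upd l2 i f -> l1 = l2.
Proof.
  intros Hf. revert l2 i; induction l1 as [|x l1 IH]; intros [|y l2] [|i] H; simpl in H;
    try discriminate; auto.
  - injection H as H1 H2. f_equal; auto.
  - injection H as H1 H2. f_equal; eauto.
Qed.

Lemma Tinv_inj o d m1 m2 : Tinv o d m1 = Tinv o d m2 -> m1 = m2.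
Proof.
  unfold Tinv. intros H. apply upd_inj in H; [|intros; lia]. apply upd_inj in H; [|intros; lia]. auto.
Qed.

Lemma length_Tinv o d m : length (Tinv o d m) = length m.
Proof. unfold Tinv. rewrite !length_upd. reflexivity. Qed.

Definition zshift (i o d : nat) : Z :=
  ((if Nat.eqb i o then 1 else 0) - (if Nat.eqb i d then 1 else 0))%Z.

Lemma nth_Tinv o d m i : (o < length m)%nat -> (d < length m)%nat ->
  nth i (Tinv o d m) 0%Z = (nth i m 0%Z + zshift i o d)%Z.
Proof.
  intros Ho Hd. unfold Tinv, zshift. rewrite nth_upd by (rewrite length_upd; auto).
  rewrite !nth_upd by auto.
  destruct (i =? d) eqn:E1; destruct (i =? o) eqn:E2; destruct (d =? o) eqn:E3;
  repeat match goal with H : (_ =? _) = true |- _ => apply Nat.eqb_eq in H | H : (_ =? _) = false |- _ => apply Nat.eqb_neq in H end; subst; try lia.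
Qed.

Lemma list_gap (l : list R) t : exists d, 0 < d <= 1 /\ forall x, In x l -> ~ (t < x < t + d).
Proof.
  induction l as [|x l IH].
  - exists 1. split; [lra|]. intros x [].
  - destruct IH as [d [Hd H]].
    destruct (Rlt_dec t x) as [Htx|Htx].
    + exists (Rmin d (x - t)). split. split; [apply Rmin_case; lra|]. pose proof (Rmin_l d (x-t)); lra.
      intros y [<-|Hy]. pose proof (Rmin_r d (x-t)); lra.
      intros Hc. apply (H y Hy). pose proof (Rmin_l d (x-t)); lra.
    + exists d. split; [lra|]. intros y [<-|Hy]; [lra|]. apply H; auto.
Qed.

Lemma cont_bound f T : cont_nonneg f -> 0 <= T -> exists B, forall s, 0 <= s <= T -> f s <= B.
Proof.
  intros Hf HT.
  apply (real_ind (fun x => exists B, forall s, 0 <= s <= x -> f s <= B) 0 T); try lra.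
  - exists (f 0). intros s Hs. replace s with 0 by lra. lra.
  - intros x Hx [B HB]. destruct (Hf x ltac:(lra) 1 ltac:(lra)) as [d [Hd Hc]].
    exists d. split; auto. intros s Hs. exists (Rmax B (f x + 1)). intros y Hy.
    destruct (Rle_dec y x). apply Rle_trans with B; [apply HB; lra| apply Rmax_l].
    assert (Rabs (y - x) < d) by (rewrite Rabs_right; lra).
    specialize (Hc y ltac:(lra) H). apply Rabs_def2 in Hc.
    apply Rle_trans with (f x + 1); [lra| apply Rmax_r].
  - intros x Hx Hbelow. destruct (Hf x ltac:(lra) 1 ltac:(lra)) as [d [Hd Hc]].
    set (y0 := Rmax 0 (x - d/2)).
    assert (0 <= y0) by apply Rmax_l. assert (x - d/2 <= y0) by apply Rmax_r.
    assert (y0 < x) by (unfold y0; apply Rmax_case; lra).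
    destruct (Hbelow y0 ltac:(lra)) as [B HB].
    exists (Rmax B (f x + 1)). intros y Hy.
    destruct (Rle_dec y y0). apply Rle_trans with B; [apply HB; lra| apply Rmax_l].
    assert (Rabs (y - x) < d) by (unfold Rabs; destruct (Rcase_abs (y - x)); lra).
    specialize (Hc y ltac:(lra) H2). apply Rabs_def2 in Hc.
    apply Rle_trans with (f x + 1); [lra| apply Rmax_r].
Qed.

Lemma sum_bound {A} (L : list A) (F : A -> R -> R) T :
  (forall a, In a L -> exists B, forall s, 0 <= s <= T -> F a s <= B) ->
  exists B, forall s, 0 <= s <= T -> sumR L (fun a => F a s) <= B.
Proof.
  induction L as [|a L IH]; intros H.
  - exists 0. intros; simpl; lra.
  - destruct (H a (or_introl eq_refl)) as [B1 H1]. destruct IH as [B2 H2].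
    { intros; apply H; right; auto. }
    exists (B1 + B2). intros s Hs. simpl. specialize (H1 s Hs). specialize (H2 s Hs). lra.
Qed.

Theorem corollary1 (k : nat) (c v : nat -> nat)
  (lam : nat -> nat -> R -> R) (rho : nat -> nat -> R -> Prop)
  (p : list Z -> R -> R) (pF : R -> R)
  (q : nat -> Z -> R -> R) (qF : nat -> R -> R) :
  valid_data k c v lam rho ->
  coupled_solution k c v lam rho p pF ->
  decoupled_solution k c v lam rho q qF ->
  forall t, 0 <= t -> pF t <= sumR (seq 0 k) (fun i => qF i t).
Proof.
  intros Hv Hc HD T HT.
  destruct Hv as [Hk [Hvc [Hlam [Hrho Hdisj]]]].
  destruct Hc as [Cout [Cinit [CF0 [Cjump [Cder Crc]]]]].
  set (Ml := Mlist k c).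
  assert (InMl : forall m, In m Ml <-> inM k c m) by (intros; apply In_Mlist).
  assert (Hpairs : forall od, In od (pairs k) -> (fst od < k)%nat /\ (snd od < k)%nat /\ fst od <> snd od).
  { intros [o d] H. apply pairs_In in H. exact H. }
  assert (Hfin : forall t, 0 <= t -> exists d, d > 0 /\ forall s, t < s < t + d -> ~ rho_all k rho s).
  { intros t Ht.
    destruct (finite_min (pairs k) (fun od d => forall s, t < s < t + d -> ~ rho (fst od) (snd od) s))
      as [d [Hd Hq]].
    - intros a d0 d' _ Hd' H s Hs. apply H. lra.
    - intros [o d] Hod. apply pairs_In in Hod. destruct Hod as [Ho [Hd Hne]].
      destruct (Hrho o d Ho Hd Hne) as [_ Hlf]. destruct (Hlf (t + 1)) as [l Hl].
      destruct (list_gap l t) as [d0 [Hd0 Hg]]. exists d0. split; [lra|].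
      intros s Hs Hr. apply (Hg s); [apply Hl; auto; lra| lra].
    - exists d. split; auto. intros s Hs [o [d' [Ho [Hd' [Hne Hr]]]]].
      apply (Hq (o, d') ltac:(apply pairs_In; auto) s Hs). exact Hr. }
  set (Lam := fun s => sumR (pairs k) (fun od => lam (fst od) (snd od) s)).
  assert (Hlam0 : forall od s, In od (pairs k) -> 0 <= s -> 0 <= lam (fst od) (snd od) s).
  { intros od s Hod Hs. destruct (Hpairs od Hod) as [Ho [Hd Hne]]. apply (Hlam _ _ Ho Hd Hne). auto. }
  assert (Lam0 : forall s, 0 <= s -> 0 <= Lam s).
  { intros s Hs. apply sumR_nonneg. intros; apply Hlam0; auto. }
  destruct (sum_bound (pairs k) (fun od s => lam (fst od) (snd od) s) T) as [B0 HB0].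
  { intros od Hod. destruct (Hpairs od Hod) as [Ho [Hd Hne]].
    apply cont_bound; auto. apply (Hlam _ _ Ho Hd Hne). }
  set (B := Rmax B0 0).
  assert (HB : 0 <= B) by apply Rmax_r.
  assert (HLB : forall s, 0 <= s <= T -> Lam s <= B).
  { intros s Hs. apply Rle_trans with B0; [apply HB0; auto| apply Rmax_l]. }
  assert (Pnn : forall m s, 0 <= s <= T -> 0 <= p m s).
  { intros m s Hs. destruct (classic (inM k c m)) as [HM|HM]; [|rewrite Cout; auto; lra].
    apply InMl in HM. revert s Hs m HM.
    apply (pos_lemma Ml p (rho_all k rho) T B HB).
    - intros m Hm. rewrite Cinit by (apply InMl; auto). destruct list_eq_dec; lra.
    - intros m t Hm Ht. apply (Crc t Ht).
    - exact Hfin.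
    - intros t Ht [o [d [Ho [Hd [Hne Hr]]]]] Hbef m Hm.
      destruct (Cjump o d t Ho Hd Hne Hr) as [Hj _].
      apply (left_lim_nonneg _ t _ 0 (Hj m (proj1 (InMl m) Hm))); [lra|].
      intros s Hs. destruct (classic (inM k c (Tinv o d m))) as [HM|HM].
      + apply Hbef; auto. apply InMl; auto.
      + rewrite Cout; auto; lra.
    - intros t Ht Hnr m Hm. destruct (Cder t ltac:(lra) Hnr) as [Hdp _].
      eexists. split; [apply Hdp; apply InMl; auto|].
      intros eta Heta Hall Hneg.
      assert (H1 : sumR (pairs k) (fun od => lam (fst od) (snd od) t * p (Tinv (fst od) (snd od) m) t)
                   >= sumR (pairs k) (fun od => lam (fst od) (snd od) t * (- eta))).
      { apply Rle_ge, sumR_le. intros od Hod. apply Rmult_le_compat_l; [apply Hlam0; auto; lra|].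
        destruct (classic (inM k c (Tinv (fst od) (snd od) m))) as [HM|HM].
        + apply Hall, InMl; auto.
        + rewrite Cout; auto; lra. }
      rewrite (sumR_ext _ (fun od => lam (fst od) (snd od) t * - eta) (fun od => (- eta) * lam (fst od) (snd od) t)) in H1 by (intros; ring).
      rewrite sumR_scal in H1. fold (Lam t) in *.
      assert (Lam t <= B) by (apply HLB; lra). assert (0 <= Lam t) by (apply Lam0; lra).
      assert (- p m t * Lam t >= 0) by (apply Rle_ge; apply Rmult_le_pos; lra).
      nra. }
  assert (Mlen : forall m, In m Ml -> length m = k /\ forall i, (i < k)%nat -> (0 <= nth i m 0%Z <= Z.of_nat (c i))%Z).
  { intros m Hm. apply InMl in Hm. exact Hm. }
  set (rr := fun i j s => sumR Ml (fun m => if Z.eqb (nth i m 0%Z) j then p m s else 0)).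
  set (X := fun i o d j s => sumR Ml (fun m => if Z.eqb (nth i m 0%Z) j then p (Tinv o d m) s else 0)).
  assert (Xle : forall i o d j s, (o < k)%nat -> (d < k)%nat -> 0 <= s <= T ->
             X i o d j s <= rr i (j + zshift i o d)%Z s).
  { intros i o d j s Ho Hd Hs. unfold X, rr.
    set (h := fun x => if Z.eqb (nth i x 0%Z) (j + zshift i o d)%Z then p x s else 0).
    rewrite (sumR_ext Ml (fun m => if Z.eqb (nth i m 0%Z) j then p (Tinv o d m) s else 0)
                         (fun m => h (Tinv o d m))).
    2:{ intros m Hm. destruct (Mlen m Hm) as [Hl _]. unfold h. rewrite nth_Tinv by lia.
        destruct (Z.eqb_spec (nth i m 0%Z) j); destruct (Z.eqb_spec (nth i m 0%Z + zshift i o d)%Z (j + zshift i o d)%Z);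
        try reflexivity; lia. }
    rewrite <- sumR_map. apply (sumR_sub_le (list_eq_dec Z.eq_dec)).
    - intros x. unfold h. destruct Z.eqb; [apply Pnn; auto| lra].
    - apply NoDup_map_NoDup_ForallPairs; [|apply NoDup_Mlist]. intros a b _ _. apply Tinv_inj.
    - intros x _ Hx. unfold h in Hx. destruct Z.eqb; [|lra].
      apply InMl. destruct (classic (inM k c x)) as [|HM]; auto. rewrite Cout in Hx; auto. lra. }
  assert (rr_out : forall i j s, (i < k)%nat -> (j < 0 \/ j > Z.of_nat (c i))%Z -> rr i j s = 0).
  { intros i j s Hi Hj. apply sumR_none. intros m Hm. destruct (Mlen m Hm) as [_ Hb].
    specialize (Hb i Hi). destruct (Z.eqb_spec (nth i m 0%Z) j); [lia|reflexivity]. }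
  assert (lamd_eq : forall i s, (i < k)%nat -> lam_d k lam i s =
      sumR (pairs k) (fun od => if Nat.eqb (fst od) i then lam (fst od) (snd od) s else 0)).
  { intros i s Hi. symmetry. exact (PL_o k i (fun od => lam (fst od) (snd od) s) Hi). }
  assert (lama_eq : forall i s, (i < k)%nat -> lam_a k lam i s =
      sumR (pairs k) (fun od => if Nat.eqb (snd od) i then lam (fst od) (snd od) s else 0)).
  { intros i s Hi. symmetry. exact (PL_d k i (fun od => lam (fst od) (snd od) s) Hi). }
  assert (lamad : forall i s, (i < k)%nat -> 0 <= s ->
     0 <= lam_a k lam i s /\ 0 <= lam_d k lam i s /\ lam_a k lam i s + lam_d k lam i s <= Lam s).
  { intros i s Hi Hs. rewrite lama_eq, lamd_eq by auto. split; [|split].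
    - apply sumR_nonneg. intros od Hod. destruct Nat.eqb; [apply Hlam0; auto|lra].
    - apply sumR_nonneg. intros od Hod. destruct Nat.eqb; [apply Hlam0; auto|lra].
    - rewrite <- sumR_plus. apply sumR_le. intros od Hod. destruct (Hpairs od Hod) as [_ [_ Hne]].
      pose proof (Hlam0 od s Hod Hs).
      destruct (Nat.eqb_spec (snd od) i); destruct (Nat.eqb_spec (fst od) i); try lra. congruence. }
  set (dp := fun m t => sumR (pairs k) (fun od => lam (fst od) (snd od) t * p (Tinv (fst od) (snd od) m) t) - p m t * Lam t).
  assert (rr_der : forall i j t, 0 < t -> ~ rho_all k rho t ->
     derivable_pt_lim (rr i j) t (sumR Ml (fun m => if Z.eqb (nth i m 0%Z) j then dp m t else 0))).
  { intros i j t Ht Hnr. unfold rr.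
    apply (derivable_sumR Ml (fun m s => if Z.eqb (nth i m 0%Z) j then p m s else 0)).
    intros m Hm. cbv beta. destruct (Z.eqb (nth i m 0%Z) j).
    - apply (proj1 (Cder t Ht Hnr) m). apply InMl; auto.
    - apply (derivable_pt_lim_const 0 t). }
  assert (drr_le : forall i j t, (i < k)%nat -> 0 < t <= T ->
     sumR Ml (fun m => if Z.eqb (nth i m 0%Z) j then dp m t else 0) <=
     lam_a k lam i t * (rr i (j - 1)%Z t - rr i j t) + lam_d k lam i t * (rr i (j + 1)%Z t - rr i j t)).
  { intros i j t Hi Ht.
    rewrite (sumR_ext Ml (fun m => if Z.eqb (nth i m 0%Z) j then dp m t else 0)
       (fun m => sumR (pairs k) (fun od => lam (fst od) (snd od) t *
          ((if Z.eqb (nth i m 0%Z) j then p (Tinv (fst od) (snd od) m) t else 0)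
           - (if Z.eqb (nth i m 0%Z) j then p m t else 0))))).
    2:{ intros m Hm. destruct (Z.eqb (nth i m 0%Z) j).
        - unfold dp, Lam. rewrite <- sumR_scal, <- sumR_minus. apply sumR_ext. intros; ring.
        - symmetry. apply sumR_none. intros; ring. }
    rewrite sumR_swap.
    rewrite (sumR_ext (pairs k) _ (fun od => lam (fst od) (snd od) t * (X i (fst od) (snd od) j t - rr i j t))).
    2:{ intros od _. unfold X, rr. rewrite <- sumR_minus, <- sumR_scal. reflexivity. }
    apply Rle_trans with (sumR (pairs k) (fun od => lam (fst od) (snd od) t *
                            (rr i (j + zshift i (fst od) (snd od))%Z t - rr i j t))).
    { apply sumR_le. intros od Hod. destruct (Hpairs od Hod) as [Ho [Hd _]].
      apply Rmult_le_compat_l; [apply Hlam0; auto; lra|].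
      pose proof (Xle i (fst od) (snd od) j t Ho Hd ltac:(lra)). lra. }
    right.
    rewrite (sumR_ext (pairs k) _ (fun od => (if Nat.eqb (snd od) i then lam (fst od) (snd od) t else 0) * (rr i (j - 1)%Z t - rr i j t)
                 + (if Nat.eqb (fst od) i then lam (fst od) (snd od) t else 0) * (rr i (j + 1)%Z t - rr i j t))).
    2:{ intros [o d] Hod. destruct (Hpairs _ Hod) as [_ [_ Hne]]. simpl in *.
        assert (E1 : (j + (1 - 0))%Z = (j + 1)%Z) by ring.
        assert (E2 : (j + (0 - 1))%Z = (j - 1)%Z) by ring.
        assert (E3 : (j + (0 - 0))%Z = j) by ring.
        unfold zshift.
        destruct (Nat.eqb_spec o i); destruct (Nat.eqb_spec d i); destruct (Nat.eqb_spec i o);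
          destruct (Nat.eqb_spec i d); subst; try congruence; rewrite ?E1, ?E2, ?E3; ring. }
    rewrite sumR_plus, !sumR_mult_r, <- lama_eq, <- lamd_eq by auto. reflexivity. }
  assert (na_of : forall i o d t, (i < k)%nat -> (o < k)%nat -> (d < k)%nat -> o <> d -> rho o d t ->
            o <> i -> d <> i -> ~ rho_a k rho i t /\ ~ rho_d k rho i t).
  { intros i o d t Hi Ho Hd Hne Hr Hoi Hdi. split.
    - intros [o' [Ho' [Hne' Hr']]]. destruct (Hdisj o d o' i t Ho Hd Hne Ho' Hi Hne' Hr Hr'). congruence.
    - intros [d' [Hd' [Hne' Hr']]]. destruct (Hdisj o d i d' t Ho Hd Hne Hi Hd' (not_eq_sym Hne') Hr Hr'). congruence. }
  assert (nr_a : forall i t, ~ rho_all k rho t -> (i < k)%nat -> ~ rho_a k rho i t /\ ~ rho_d k rho i t).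
  { intros i t Hn Hi. split.
    - intros [o [Ho [Hne Hr]]]. apply Hn. exists o, i. auto.
    - intros [d [Hd [Hne Hr]]]. apply Hn. exists i, d. auto. }
  assert (rho_pos : forall t, rho_all k rho t -> 0 < t).
  { intros t [o [d [Ho [Hd [Hne Hr]]]]]. exact (proj1 (Hrho o d Ho Hd Hne) t Hr). }
  assert (LX : forall i o d j t, (o < k)%nat -> (d < k)%nat -> o <> d -> rho o d t ->
             left_lim (X i o d j) t (rr i j t)).
  { intros i o d j t Ho Hd Hne Hr. unfold X, rr.
    apply (left_lim_sumR Ml (fun m s => if Z.eqb (nth i m 0%Z) j then p (Tinv o d m) s else 0)).
    intros m Hm. cbv beta. destruct (Z.eqb (nth i m 0%Z) j).
    - apply (proj1 (Cjump o d t Ho Hd Hne Hr)). apply InMl; auto.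
    - apply left_lim_const. }
  assert (nth_init : forall i', (i' < k)%nat -> nth i' (init_state k v) 0%Z = Z.of_nat (v i')).
  { intros i' Hi'. unfold init_state.
    rewrite (nth_indep _ 0%Z (Z.of_nat (v 0%nat))) by (rewrite length_map, length_seq; lia).
    rewrite (map_nth (fun i0 => Z.of_nat (v i0)) (seq 0 k) 0%nat i'), seq_nth by lia. reflexivity. }
  assert (Dnn : forall i, (i < k)%nat -> forall j s, 0 <= s <= T -> rr i j s <= q i j s).
  { intros i Hi.
    destruct (HD i Hi) as [Qout [Qinit [QF0 [Qja [Qjd [Qder Qrc]]]]]].
    set (Zs := map Z.of_nat (seq 0 (S (c i)))).
    assert (inZs : forall j, In j Zs <-> (0 <= j <= Z.of_nat (c i))%Z).
    { intros j. unfold Zs. rewrite in_map_iff. split.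
      - intros [x [<- Hx]]. apply in_seq in Hx. lia.
      - intros Hj. exists (Z.to_nat j). split; [lia|]. apply in_seq. lia. }
    assert (ext : forall j s, (forall b, In b Zs -> 0 <= q i b s - rr i b s) -> 0 <= q i j s - rr i j s).
    { intros j s H. destruct (Z_le_gt_dec 0 j); [destruct (Z_le_gt_dec j (Z.of_nat (c i)))|].
      - apply H, inZs. lia.
      - rewrite Qout, rr_out by (auto; lia). lra.
      - rewrite Qout, rr_out by (auto; lia). lra. }
    assert (fam : forall s, 0 <= s <= T -> forall j, In j Zs -> 0 <= q i j s - rr i j s).
    { apply (pos_lemma Zs (fun j s => q i j s - rr i j s) (rho_all k rho) T B HB).
      - intros j Hj. apply inZs in Hj. rewrite Qinit by auto.
        assert (Hinit : In (init_state k v) Ml).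
        { apply InMl. split. unfold init_state. rewrite length_map, length_seq. reflexivity.
          intros i' Hi'. rewrite nth_init by auto. specialize (Hvc i' Hi'). lia. }
        unfold rr. rewrite (sumR_single _ _ (init_state k v) (NoDup_Mlist k c) Hinit).
        + rewrite Cinit by (apply InMl; auto). destruct list_eq_dec as [_|]; [|congruence].
          rewrite nth_init by auto. rewrite Z.eqb_sym. destruct Z.eqb; lra.
        + intros x Hx Hne. rewrite Cinit by (apply InMl; auto). destruct list_eq_dec; [congruence|].
          destruct Z.eqb; reflexivity.
      - intros j t Hj Ht. apply right_cont_minus. apply (Qrc t Ht).
        unfold rr. apply (right_cont_sumR Ml (fun m s => if Z.eqb (nth i m 0%Z) j then p m s else 0)).
        intros m _. cbv beta. destruct Z.eqb; [apply (Crc t Ht)| apply right_cont_const].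
      - exact Hfin.
      - intros t Ht Hra Hbef j Hj.
        assert (Dall : forall j' s, 0 <= s < t -> 0 <= q i j' s - rr i j' s).
        { intros j' s Hs. apply ext. intros b Hb. apply Hbef; auto. }
        destruct Hra as [o [d [Ho [Hd [Hne Hr]]]]].
        pose proof (LX i o d j t Ho Hd Hne Hr) as HX.
        apply inZs in Hj.
        destruct (Nat.eq_dec d i) as [->|Hdi].
        + assert (Ha : rho_a k rho i t) by (exists o; auto).
          pose proof (proj1 (Qja t Ha) j Hj) as Hq.
          apply (left_lim_nonneg _ t _ 0 (left_lim_minus _ _ _ _ _ Hq HX)); [lra|].
          intros s Hs. pose proof (Xle i o i j s Ho Hi ltac:(lra)) as Hx.
          replace (j + zshift i o i)%Z with (j - 1)%Z in Hx
            by (unfold zshift; rewrite Nat.eqb_refl; destruct (Nat.eqb_spec i o); [congruence|ring]).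
          pose proof (Dall (j - 1)%Z s Hs). lra.
        + destruct (Nat.eq_dec o i) as [->|Hoi].
          * assert (Hdd : rho_d k rho i t) by (exists d; auto).
            pose proof (proj1 (Qjd t Hdd) j Hj) as Hq.
            apply (left_lim_nonneg _ t _ 0 (left_lim_minus _ _ _ _ _ Hq HX)); [lra|].
            intros s Hs. pose proof (Xle i i d j s Hi Hd ltac:(lra)) as Hx.
            replace (j + zshift i i d)%Z with (j + 1)%Z in Hx
              by (unfold zshift; rewrite Nat.eqb_refl; destruct (Nat.eqb_spec i d); [congruence|ring]).
            pose proof (Dall (j + 1)%Z s Hs). lra.
          * destruct (na_of i o d t Hi Ho Hd Hne Hr Hoi Hdi) as [Hna Hnd].
            destruct (Qder t ltac:(lra) Hna Hnd) as [Hqd _].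
            pose proof (left_lim_of_deriv _ _ _ (Hqd j Hj)) as Hq.
            apply (left_lim_nonneg _ t _ 0 (left_lim_minus _ _ _ _ _ Hq HX)); [lra|].
            intros s Hs. pose proof (Xle i o d j s Ho Hd ltac:(lra)) as Hx.
            replace (j + zshift i o d)%Z with j in Hx
              by (unfold zshift; destruct (Nat.eqb_spec i o); [congruence|];
                  destruct (Nat.eqb_spec i d); [congruence|]; ring).
            pose proof (Dall j s Hs). lra.
      - intros t Ht Hnr j Hj. destruct (nr_a i t Hnr Hi) as [Hna Hnd].
        apply inZs in Hj.
        destruct (Qder t ltac:(lra) Hna Hnd) as [Hqd _].
        eexists. split. apply dminus. apply (Hqd j Hj). apply rr_der; [lra|auto].
        intros eta Heta Hall Hneg.
        pose proof (drr_le i j t Hi ltac:(lra)) as Hdrr.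
        assert (Hm1 : - eta <= q i (j - 1)%Z t - rr i (j - 1)%Z t).
        { destruct (Z_le_gt_dec 0 (j - 1)). apply Hall, inZs; lia.
          rewrite Qout, rr_out by (auto; lia). lra. }
        assert (Hp1 : - eta <= q i (j + 1)%Z t - rr i (j + 1)%Z t).
        { destruct (Z_le_gt_dec (j + 1) (Z.of_nat (c i))). apply Hall, inZs; lia.
          rewrite Qout, rr_out by (auto; lia). lra. }
        destruct (lamad i t Hi ltac:(lra)) as [Ha0 [Hd0 Had]].
        assert (Lam t <= B) by (apply HLB; lra).
        set (la := lam_a k lam i t) in *. set (ld := lam_d k lam i t) in *.
        set (D0 := q i j t - rr i j t) in *.
        assert (la * (q i (j - 1)%Z t - rr i (j - 1)%Z t + eta) >= 0) by (apply Rle_ge, Rmult_le_pos; lra).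
        assert (ld * (q i (j + 1)%Z t - rr i (j + 1)%Z t + eta) >= 0) by (apply Rle_ge, Rmult_le_pos; lra).
        assert (0 <= (la + ld) * (- D0)) by (apply Rmult_le_pos; lra).
        assert ((la + ld) * eta <= B * eta) by (apply Rmult_le_compat_r; lra).
        unfold D0 in *. nra. }
    intros j s Hs. specialize (ext j s (fam s Hs)). lra. }
  assert (Fle : forall o d s, 0 <= s <= T ->
     sumR (filter (failM c o d) Ml) (fun m => p m s) <= rr o 0%Z s + rr d (Z.of_nat (c d)) s).
  { intros o d s Hs. rewrite sumR_filter. unfold rr. rewrite <- sumR_plus. apply sumR_le.
    intros m _. unfold failM. pose proof (Pnn m s Hs).
    destruct (Z.eqb (nth o m 0%Z) 0); destruct (Z.eqb (nth d m 0%Z) (Z.of_nat (c d))); simpl; lra. }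
  assert (pair_split : forall (g h : nat -> R) s,
     sumR (pairs k) (fun od => lam (fst od) (snd od) s * (g (fst od) + h (snd od))) =
     sumR (seq 0 k) (fun i => lam_d k lam i s * g i + lam_a k lam i s * h i)).
  { intros g h s.
    rewrite (sumR_ext (pairs k) _ (fun od => sumR (seq 0 k) (fun i =>
        (if Nat.eqb (fst od) i then lam (fst od) (snd od) s else 0) * g i +
        (if Nat.eqb (snd od) i then lam (fst od) (snd od) s else 0) * h i))).
    2:{ intros od Hod. destruct (Hpairs od Hod) as [Ho [Hd _]]. rewrite sumR_plus.
        rewrite (sumR_ext (seq 0 k) (fun i => (if Nat.eqb (fst od) i then lam (fst od) (snd od) s else 0) * g i)
                   (fun i => if Nat.eqb i (fst od) then lam (fst od) (snd od) s * g i else 0))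
          by (intros; rewrite Nat.eqb_sym; destruct Nat.eqb; ring).
        rewrite (sumR_ext (seq 0 k) (fun i => (if Nat.eqb (snd od) i then lam (fst od) (snd od) s else 0) * h i)
                   (fun i => if Nat.eqb i (snd od) then lam (fst od) (snd od) s * h i else 0))
          by (intros; rewrite Nat.eqb_sym; destruct Nat.eqb; ring).
        rewrite (sumR_ind_seq k (fst od) (fun i => lam (fst od) (snd od) s * g i)) by auto.
        rewrite (sumR_ind_seq k (snd od) (fun i => lam (fst od) (snd od) s * h i)) by auto.
        ring. }
    rewrite sumR_swap. apply sumR_ext. intros i Hi. apply in_seq in Hi.
    rewrite sumR_plus, !sumR_mult_r, <- lamd_eq, <- lama_eq by lia. reflexivity. }
  set (G := fun s => sumR (seq 0 k) (fun i => qF i s) - pF s).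
  assert (Gnn : forall s, 0 <= s <= T -> 0 <= G s).
  { intros s0 Hs0.
    refine (pos_lemma [tt] (fun _ s => G s) (rho_all k rho) T B HB _ _ _ _ _ s0 Hs0 tt (or_introl eq_refl)).
    - intros _ _. unfold G. rewrite CF0, sumR_none; [lra|].
      intros i Hi. apply in_seq in Hi. destruct (HD i ltac:(lia)) as [_ [_ [H _]]]. exact H.
    - intros _ t _ Ht. unfold G. apply right_cont_minus; [|apply (Crc t Ht)].
      apply (right_cont_sumR (seq 0 k) (fun i s => qF i s)). intros i Hi. apply in_seq in Hi.
      destruct (HD i ltac:(lia)) as [_ [_ [_ [_ [_ [_ H]]]]]]. apply (H t Ht).
    - exact Hfin.
    - intros t Ht [o [d [Ho [Hd [Hne Hr]]]]] Hbef _ _.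
      assert (Hq : forall i, In i (seq 0 k) -> left_lim (fun s => qF i s +
          (if Nat.eqb i o then q o 0%Z s else 0) + (if Nat.eqb i d then q d (Z.of_nat (c d)) s else 0)) t (qF i t)).
      { intros i Hi. apply in_seq in Hi.
        destruct (HD i ltac:(lia)) as [_ [_ [_ [Qja [Qjd [Qder _]]]]]].
        destruct (Nat.eqb_spec i o) as [->|Hio].
        - destruct (Nat.eqb_spec o d) as [|_]; [congruence|].
          assert (Hdd : rho_d k rho o t) by (exists d; auto).
          apply (left_lim_ext (fun s => qF o s + q o 0%Z s)); [intros; ring|]. apply (proj2 (Qjd t Hdd)).
        - destruct (Nat.eqb_spec i d) as [->|Hid].
          + assert (Ha : rho_a k rho d t) by (exists o; auto).
            apply (left_lim_ext (fun s => qF d s + q d (Z.of_nat (c d)) s)); [intros; ring|]. apply (proj2 (Qja t Ha)).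
          + destruct (na_of i o d t ltac:(lia) Ho Hd Hne Hr (not_eq_sym Hio) (not_eq_sym Hid)) as [Hna Hnd].
            destruct (Qder t ltac:(lra) Hna Hnd) as [_ Hqd].
            apply (left_lim_ext (qF i)); [intros; ring|]. exact (left_lim_of_deriv _ _ _ Hqd). }
      pose proof (left_lim_sumR (seq 0 k) _ (fun i => qF i t) t Hq) as HS.
      pose proof (left_lim_minus _ _ _ _ _ HS (proj2 (Cjump o d t Ho Hd Hne Hr))) as HG.
      apply (left_lim_nonneg _ t _ 0 HG); [lra|]. intros s Hs'.
      rewrite sumR_plus, sumR_plus.
      rewrite (sumR_ind_seq k o (fun _ => q o 0%Z s)) by auto.
      rewrite (sumR_ind_seq k d (fun _ => q d (Z.of_nat (c d)) s)) by auto.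
      pose proof (Hbef s Hs' tt (or_introl eq_refl)) as HGs. unfold G in HGs.
      pose proof (Fle o d s ltac:(lra)).
      pose proof (Dnn o Ho 0%Z s ltac:(lra)). pose proof (Dnn d Hd (Z.of_nat (c d)) s ltac:(lra)).
      change (Mlist k c) with Ml. lra.
    - intros t Ht Hnr _ _.
      assert (Hq : forall i, In i (seq 0 k) -> derivable_pt_lim (qF i) t
          (lam_a k lam i t * q i (Z.of_nat (c i)) t + lam_d k lam i t * q i 0%Z t)).
      { intros i Hi. apply in_seq in Hi. destruct (nr_a i t Hnr ltac:(lia)) as [Hna Hnd].
        destruct (HD i ltac:(lia)) as [_ [_ [_ [_ [_ [Qder _]]]]]].
        exact (proj2 (Qder t ltac:(lra) Hna Hnd)). }
      pose proof (derivable_sumR (seq 0 k) (fun i s => qF i s) _ t Hq) as HS.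
      pose proof (dminus _ _ _ _ _ HS (proj2 (Cder t ltac:(lra) Hnr))) as HG.
      eexists. split; [exact HG|]. intros eta Heta _ _.
      assert (0 <= B * eta) by (apply Rmult_le_pos; lra).
      cut (0 <= sumR (seq 0 k) (fun i => lam_a k lam i t * q i (Z.of_nat (c i)) t + lam_d k lam i t * q i 0%Z t) -
        sumR (pairs k) (fun od => lam (fst od) (snd od) t *
          sumR (filter (failM c (fst od) (snd od)) (Mlist k c)) (fun m => p m t))); [lra|].
      apply Rle_trans with (sumR (seq 0 k) (fun i => lam_a k lam i t * q i (Z.of_nat (c i)) t + lam_d k lam i t * q i 0%Z t) -
        sumR (pairs k) (fun od => lam (fst od) (snd od) t * (rr (fst od) 0%Z t + rr (snd od) (Z.of_nat (c (snd od))) t))).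
      2:{ apply Rplus_le_compat_l, Ropp_le_contravar, sumR_le. intros od Hod.
          apply Rmult_le_compat_l; [apply Hlam0; auto; lra|]. apply Fle. lra. }
      rewrite (pair_split (fun i => rr i 0%Z t) (fun i => rr i (Z.of_nat (c i)) t) t).
      rewrite <- sumR_minus. apply sumR_nonneg. intros i Hi. apply in_seq in Hi.
      destruct (lamad i t ltac:(lia) ltac:(lra)) as [Ha0 [Hd0 _]].
      pose proof (Dnn i ltac:(lia) 0%Z t ltac:(lra)). pose proof (Dnn i ltac:(lia) (Z.of_nat (c i)) t ltac:(lra)).
      assert (0 <= lam_a k lam i t * (q i (Z.of_nat (c i)) t - rr i (Z.of_nat (c i)) t)) by (apply Rmult_le_pos; lra).
      assert (0 <= lam_d k lam i t * (q i 0%Z t - rr i 0%Z t)) by (apply Rmult_le_pos; lra).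
      lra. }
  specialize (Gnn T ltac:(lra)). unfold G in Gnn. lra.
Qed.
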